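(* Let $T(n) = (3n+1)/2^{v_2(3n+1)}$ for odd $n\ge 1$, let $n_0$ be an odd positive integer with orbit $n_{t+1} = T(n_t)$, and $X_t = \mathbf{1}[n_t\equiv 1 \pmod 4]$. Let $s$ be a burst start (i.e. $X_s = 1$ and either $s = 0$ or $X_{s-1}=0$) with $n_s \equiv 25$, $29$, or $57 \pmod{64}$, and let $t \ge s$ be the burst-ending time of that burst run (the last index with $X_s = \dots = X_t = 1$). If $n_t \equiv 1 \pmod 8$, then $n_t \equiv 25 \pmod{32}$. In particular no such cycle yields a burst-ending value with $n_t \equiv 1 \pmod 8$ and $n_t \equiv 9 \pmod{32}$.
   Context: $v_2$ is the $2$-adic valuation. Burst starts in the classes $25, 29, 57 \pmod{64}$ are called unconditional non-mixing cycles. *)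

(* Defs.v *)
From mathcomp Require Import all_boot.

Definition v2 (m : nat) : nat := logn 2 m.

Definition T (n : nat) : nat := (3 * n + 1) %/ 2 ^ (v2 (3 * n + 1)).

Definition syr_orbit (n0 t : nat) : nat := iter t T n0.

Definition burstX (n0 t : nat) : bool := syr_orbit n0 t %% 4 == 1.

(* Main.v *)
Require Import Defs.
From mathcomp Require Import all_boot.
From mathcomp Require Import zify.

Lemma T_pow (n k m : nat) : odd m -> 3 * n + 1 = 2 ^ k * m -> T n = m.
Proof.
move=> om E; rewrite /T /v2 E lognM ?expn_gt0 //; last by case: m om {E}.
rewrite lognX (logn_prime 2 (pdiv_prime (isT : 1 < 2))) /=.
have -> : logn 2 m = 0.
  by apply: logn_coprime; rewrite coprime2n.
by rewrite muln1 addn0 mulKn // expn_gt0.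
Qed.

Lemma T_end n : n %% 64 = 25 \/ n %% 64 = 29 \/ n %% 64 = 57 -> T n %% 4 = 3.
Proof.
have E := divn_eq n 64; set q := n %/ 64 in E.
case=> [H|[H|H]]; rewrite H in E.
- rewrite (@T_pow n 2 (48 * q + 19)); first by lia.
    by rewrite oddD oddM.
  lia.
- rewrite (@T_pow n 3 (24 * q + 11)); first by lia.
    by rewrite oddD oddM.
  lia.
- rewrite (@T_pow n 2 (48 * q + 43)); first by lia.
    by rewrite oddD oddM.
  lia.
Qed.

Theorem proposition5p3 (n0 s t : nat) :
  odd n0 -> 0 < n0 ->
  (* s is a burst start *)
  burstX n0 s -> (s = 0 \/ ~~ burstX n0 s.-1) ->
  (syr_orbit n0 s %% 64 = 25 \/ syr_orbit n0 s %% 64 = 29 \/ syr_orbit n0 s %% 64 = 57) ->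
  (* t is the burst-ending time of the burst run starting at s *)
  s <= t -> (forall j, s <= j <= t -> burstX n0 j) -> ~~ burstX n0 t.+1 ->
  syr_orbit n0 t %% 8 = 1 ->
  syr_orbit n0 t %% 32 = 25 /\ syr_orbit n0 t %% 32 <> 9.
Proof.
move=> _ _ _ _ Hm Hst Hall _ H8.
have Hend := T_end _ Hm.
have Ets : t = s.
  apply/eqP; rewrite eqn_leq Hst andbT leqNgt; apply/negP => lt.
  have := Hall s.+1; rewrite ltnW // lt => /(_ isT).
  by rewrite /burstX /syr_orbit iterS -/(syr_orbit n0 s) Hend.
subst t.
set n := syr_orbit n0 s in Hm H8 *.
have E := divn_eq n 64.
have A : n %% 32 = n %% 64 %% 32 by rewrite modn_dvdm.
have B : n %% 8 = n %% 64 %% 8 by rewrite modn_dvdm.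
rewrite A; rewrite B in H8.
by case: Hm => [->|[H|->]] //; rewrite H in H8.
Qed.
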